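(* Fix a firm $A\subset\mathcal{A}$, a full-support skill distribution $p$, a full-support perception $q$, and signal structures with $\langle S',\pi'\rangle\succsim_G\langle S,\pi\rangle$ via a garbling kernel $g$. Fix surplus-maximizing selections $\widehat a_s$ ($s\in S$) and $\widehat a'_{s'}$ ($s'\in S'$) as in the context. (a) $W_A(p,q,\langle S',\pi'\rangle)-W_A(p,q,\langle S,\pi\rangle)=\mathcal{C}_A(p,q,\langle S,\pi\rangle,\langle S',\pi'\rangle)+\mathcal{I}_A(p,q,\langle S,\pi\rangle,\langle S',\pi'\rangle)$. (b) $\mathcal{I}_A(p,q,\langle S,\pi\rangle,\langle S',\pi'\rangle)\ge 0$. Suppose in addition that $A\subset\mathcal{A}_M$ and that $\langle S',\pi'\rangle$ is MLR. Then: (c) if $p\succsim_{LR}q$, then $\mathcal{C}_A(p,q,\langle S,\pi\rangle,\langle S',\pi'\rangle)\ge 0$; (d) if $q\succsim_{LR}p$, then $\mathcal{C}_A(p,q,\langle S,\pi\rangle,\langle S',\pi'\rangle)\le 0$.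
   Context: Let $\Theta\subset\mathbb{R}$ be a finite set of skill types with $|\Theta|\ge 2$. A task is a vector $a\in\mathcal{A}:=\mathbb{R}^\Theta$. A firm is a non-empty finite set $A\subset\mathcal{A}$. The firm is monotone if $A\subset\mathcal{A}_M:=\{a\in\mathbb{R}^\Theta: a(\theta')>a(\theta)\text{ whenever }\theta'>\theta\}$. A signal structure $\langle S,\pi\rangle$ consists of a non-empty finite set $S$ and a map $\pi:S\times\Theta\to[0,1]$ with $\sum_{s}\pi(s|\theta)=1$ for each $\theta$, such that every $s\in S$ has $\pi(s|\theta)>0$ for some $\theta$. Distributions and pay: - $p,q\in\Delta(\Theta)$ have full support. - Posterior: $q_{\langle S,\pi\rangle}(\theta|s):=q(\theta)\pi(s|\theta)/\sum_{\theta'}q(\theta')\pi(s|\theta')$. - Pay: $w_A(s,q,\langle S,\pi\rangle):=\max_{a\in A}\sum_\theta q_{\langle S,\pi\rangle}(\theta|s)a(\theta)$. - Average pay: $W_A(p,q,\langle S,\pi\rangle):=\sum_\theta p(\theta)\sum_s\pi(s|\theta)w_A(s,q,\langle S,\pi\rangle)$. Orders on distributions and signal structures: - $q'\succsim_{LR}q$ means $q(\theta)q'(\theta')\ge q(\theta')q'(\theta)$ whenever $\theta'>\theta$. - $\langle S',\pi'\rangle\succsim_G\langle S,\pi\rangle$ means there is a garbling kernel $g:S\times S'\to[0,1]$ with $\sum_{s}g(s|s')=1$ for each $s'$ and $\pi(s|\theta)=\sum_{s'}g(s|s')\pi'(s'|\theta)$ for all $s,\theta$. - $\langle S,\pi\rangle$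 is MLR if $S\subset\mathbb{R}$ and $\pi(s|\theta)\pi(s'|\theta')\ge\pi(s|\theta')\pi(s'|\theta)$ whenever $s'>s$ and $\theta'>\theta$. Joint distributions: define $\mu_p,\mu_q\in\Delta(\Theta\times S\times S')$ by $\mu_r(\theta,s,s'):=r(\theta)\pi'(s'|\theta)g(s|s')$ for $r\in\{p,q\}$. Marginals and conditionals such as $\mu_r(s)$, $\mu_r(s'|s)$, $\mu_r(\theta|s,s')$ are derived from these in the usual way; summands whose conditioning event has zero probability are taken to be zero. Task selections: $\widehat a_s\in\arg\max_{a\in A}\sum_\theta q_{\langle S,\pi\rangle}(\theta|s)a(\theta)$ for each $s\in S$, and $\widehat a'_{s'}\in\arg\max_{a\in A}\sum_\theta q_{\langle S',\pi'\rangle}(\theta|s')a(\theta)$ for each $s'\in S'$. Components: - Perception-correcting: $\mathcal{C}_A(p,q,\langle S,\pi\rangle,\langle S',\pi'\rangle):=\sum_{s}\mu_p(s)\sum_{s'}[\mu_p(s'|s)-\mu_q(s'|s)]\sum_\theta\mu_q(\theta|s,s')\widehat a_s(\theta)$. - Instrumental: $\mathcal{I}_A(p,q,\langle S,\pi\rangle,\langle S',\pi'\rangle):=\sum_{s'}\mu_p(s')\sum_\theta q_{\langle S',\pi'\rangle}(\theta|s')\big[\widehat a'_{s'}(\theta)-\sum_s g(s|s')\widehat a_s(\theta)\big]$, which equals $\sum_s\mu_p(s)\sum_{s'}\mu_p(s'|s)\sum_\theta\mu_q(\theta|s,s')[\widehat a'_{s'}(\theta)-\widehat a_s(\theta)]$.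 *)

(* Defs.v *)
(* Reals: an arbitrary R : realFieldType (all notions are
   finite sums/products/quotients/max of reals, so this generalises R). *)
From HB Require Import structures.
From mathcomp Require Import all_boot all_order all_algebra.
Set Implicit Arguments. Unset Strict Implicit. Unset Printing Implicit Defensive.
Import Order.TTheory GRing.Theory Num.Theory.
Local Open Scope ring_scope.

Section Firm.
Variable R : realFieldType.

(* Theta is a finite type T together with an injective embedding th : T -> R *)

Definition full_support (T : finType) (p : T -> R) : Prop :=
  (forall t, 0 < p t) /\ \sum_(t : T) p t = 1.

(* signal structure <S, pi> : pi s t = pi(s|theta) *)
Definition signal_structure (T S : finType) (pi : S -> T -> R) : Prop :=
  [/\ (forall s t, 0 <= pi s t <= 1),
      (forall t, \sum_(s : S) pi s t = 1) &
      (forall s, exists t, 0 < pi s t)].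

(* <S',pi'> >=_G <S,pi> via the garbling kernel g (g s s' = g(s|s')) *)
Definition garbling (T S S' : finType) (pi : S -> T -> R) (pi' : S' -> T -> R)
    (g : S -> S' -> R) : Prop :=
  [/\ (forall s s', 0 <= g s s' <= 1),
      (forall s', \sum_(s : S) g s s' = 1) &
      (forall s t, pi s t = \sum_(s' : S') g s s' * pi' s' t)].

Definition LR_ge (T : finType) (th : T -> R) (q' q : T -> R) : Prop :=
  forall t t', th t < th t' -> q t * q' t' >= q t' * q' t.

Definition MLR (T S : finType) (th : T -> R) (sv : S -> R) (pi : S -> T -> R) : Prop :=
  forall s s' t t', sv s < sv s' -> th t < th t' ->
    pi s t * pi s' t' >= pi s t' * pi s' t.

Definition monotone_firm (T : finType) (th : T -> R) (A : seq {ffun T -> R}) : Prop :=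
  forall a, a \in A -> forall t t', th t < th t' -> a t < a t'.

Definition posterior (T S : finType) (q : T -> R) (pi : S -> T -> R) (s : S) (t : T) : R :=
  q t * pi s t / \sum_(t' : T) q t' * pi s t'.

Definition post_val (T S : finType) (q : T -> R) (pi : S -> T -> R) (s : S)
    (a : {ffun T -> R}) : R :=
  \sum_(t : T) posterior q pi s t * a t.

Definition maxA (T : finType) (A : seq {ffun T -> R}) (f : {ffun T -> R} -> R) : R :=
  \big[Num.max/f (head 0 A)]_(a <- A) f a.

Definition pay (T S : finType) (A : seq {ffun T -> R}) (q : T -> R) (pi : S -> T -> R)
    (s : S) : R :=
  maxA A (post_val q pi s).

Definition avg_pay (T S : finType) (A : seq {ffun T -> R}) (p q : T -> R)
    (pi : S -> T -> R) : R :=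
  \sum_(t : T) p t * \sum_(s : S) pi s t * pay A q pi s.

Definition selection (T S : finType) (A : seq {ffun T -> R}) (q : T -> R)
    (pi : S -> T -> R) (ahat : S -> {ffun T -> R}) : Prop :=
  forall s, ahat s \in A /\
    (forall a, a \in A -> post_val q pi s a <= post_val q pi s (ahat s)).

(* Division by 0 is 0 in MathComp, which
   implements the convention that conditionals on null events vanish. *)
Section Joint.
Variables (T S S' : finType) (pi' : S' -> T -> R) (g : S -> S' -> R).

Definition mu (r : T -> R) (t : T) (s : S) (s' : S') : R := r t * pi' s' t * g s s'.
Definition mu_s (r : T -> R) (s : S) : R := \sum_(t : T) \sum_(s' : S') mu r t s s'.
Definition mu_s' (r : T -> R) (s' : S') : R := \sum_(t : T) \sum_(s : S) mu r t s s'.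
Definition mu_ss' (r : T -> R) (s : S) (s' : S') : R := \sum_(t : T) mu r t s s'.
Definition mu_s'_given_s (r : T -> R) (s' : S') (s : S) : R := mu_ss' r s s' / mu_s r s.
Definition mu_t_given_ss' (r : T -> R) (t : T) (s : S) (s' : S') : R :=
  mu r t s s' / mu_ss' r s s'.

Definition Ccomp (p q : T -> R) (ahat : S -> {ffun T -> R}) : R :=
  \sum_(s : S) mu_s p s *
    \sum_(s' : S') (mu_s'_given_s p s' s - mu_s'_given_s q s' s) *
      \sum_(t : T) mu_t_given_ss' q t s s' * ahat s t.

Definition Icomp (p q : T -> R) (ahat : S -> {ffun T -> R}) (ahat' : S' -> {ffun T -> R}) : R :=
  \sum_(s' : S') mu_s' p s' *
    \sum_(t : T) posterior q pi' s' t *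
      (ahat' s' t - \sum_(s : S) g s s' * ahat s t).
End Joint.

End Firm.

(* Main.v *)
Require Import Defs.
From HB Require Import structures.
From mathcomp Require Import all_boot all_order all_algebra.
From mathcomp Require Import ring lra.
Import Order.TTheory GRing.Theory Num.Theory.
Local Open Scope ring_scope.
Set Implicit Arguments. Unset Strict Implicit.

Section Helpers.
Variable R : realFieldType.

Lemma sum_pos (I : finType) (f : I -> R) i :
  (forall j, 0 <= f j) -> 0 < f i -> 0 < \sum_j f j.
Proof.
move=> H0 Hi; rewrite (bigD1 i) //=.
have : 0 <= \sum_(j | j != i) f j by apply: sumr_ge0 => j _; exact: H0.
lra.
Qed.

Lemma sym_key (I : finType) (F : I -> I -> R) :
  (forall i j, 0 <= F i j + F j i) -> 0 <= \sum_i \sum_j F i j.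
Proof.
move=> H.
have E : \sum_i \sum_j F i j = \sum_i \sum_j F j i by rewrite exchange_big.
have : 0 <= \sum_i \sum_j (F i j + F j i).
  by apply: sumr_ge0 => i _; apply: sumr_ge0 => j _; exact: H.
under eq_bigr do rewrite big_split.
rewrite big_split /= -E; lra.
Qed.

Lemma pair_nonneg (T : finType) (th : T -> R) (u v : T -> T -> R) :
  injective th ->
  (forall t t', th t < th t' -> 0 <= u t t' /\ 0 <= v t t') ->
  (forall t t', u t' t = - u t t') ->
  (forall t t', v t' t = - v t t') ->
  forall t t', 0 <= u t t' * v t t'.
Proof.
move=> inj H Hu Hv t t'.
case: (eqVneq t t') => [->|ne].
  have : u t' t' = 0 by have := Hu t' t'; lra.
  by move=> ->; rewrite mul0r.
have ne' : th t != th t' by apply: contra ne => /eqP /inj ->.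
case: (ltgtP (th t) (th t')) ne' => // [lt|gt] _.
  by have [h1 h2] := H _ _ lt; apply: mulr_ge0.
have [h1 h2] := H _ _ gt.
have -> : u t t' * v t t' = u t' t * v t' t by rewrite Hu Hv; ring.
exact: mulr_ge0.
Qed.

Lemma LR_lemma (T S' : finType) (th : T -> R) (sv : S' -> R) (pi' : S' -> T -> R)
  (x y : T -> R) s1 s2 :
  injective th -> LR_ge th x y -> MLR th sv pi' -> sv s1 < sv s2 ->
  0 <= (\sum_t y t * pi' s1 t) * (\sum_t x t * pi' s2 t)
       - (\sum_t x t * pi' s1 t) * (\sum_t y t * pi' s2 t).
Proof.
move=> inj hLR hM hs.
set F := fun t t' => (y t * x t' - x t * y t') * (pi' s1 t * pi' s2 t').
have -> : (\sum_t y t * pi' s1 t) * (\sum_t x t * pi' s2 t)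
       - (\sum_t x t * pi' s1 t) * (\sum_t y t * pi' s2 t) = \sum_t \sum_t' F t t'.
  rewrite !big_distrlr /= -sumrB; apply: eq_bigr => t _.
  rewrite -sumrB; apply: eq_bigr => t' _; rewrite /F; ring.
apply: sym_key => t t'.
have -> : F t t' + F t' t = (y t * x t' - x t * y t') *
   (pi' s1 t * pi' s2 t' - pi' s1 t' * pi' s2 t) by rewrite /F; ring.
apply: (@pair_nonneg _ th
  (fun t t' => y t * x t' - x t * y t')
  (fun t t' => pi' s1 t * pi' s2 t' - pi' s1 t' * pi' s2 t)) => //.
- move=> a b hab; split.
    by have := hLR a b hab; lra.
  by have := hM s1 s2 a b hs hab; lra.
- by move=> a b; ring.
- by move=> a b; ring.
Qed.

Lemma V_lemma (T S' : finType) (th : T -> R) (sv : S' -> R) (pi' : S' -> T -> R)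
  (q : T -> R) (a : T -> R) s1 s2 :
  injective th -> (forall t, 0 < q t) -> (forall t t', th t < th t' -> a t < a t') ->
  MLR th sv pi' -> sv s1 < sv s2 ->
  0 <= (\sum_t q t * pi' s1 t) * (\sum_t q t * pi' s2 t * a t)
       - (\sum_t q t * pi' s1 t * a t) * (\sum_t q t * pi' s2 t).
Proof.
move=> inj hq ha hM hs.
set F := fun t t' => q t * q t' * (pi' s1 t * pi' s2 t') * (a t' - a t).
have -> : (\sum_t q t * pi' s1 t) * (\sum_t q t * pi' s2 t * a t)
       - (\sum_t q t * pi' s1 t * a t) * (\sum_t q t * pi' s2 t) = \sum_t \sum_t' F t t'.
  rewrite !big_distrlr /= -sumrB; apply: eq_bigr => t _.
  rewrite -sumrB; apply: eq_bigr => t' _; rewrite /F; ring.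
apply: sym_key => t t'.
have -> : F t t' + F t' t = q t * q t' * ((pi' s1 t * pi' s2 t' - pi' s1 t' * pi' s2 t) *
   (a t' - a t)) by rewrite /F; ring.
apply: mulr_ge0; first by apply: mulr_ge0; apply: ltW.
apply: (@pair_nonneg _ th
  (fun t t' => pi' s1 t * pi' s2 t' - pi' s1 t' * pi' s2 t)
  (fun t t' => a t' - a t)) => //.
- move=> b c hbc; split.
    by have := hM s1 s2 b c hs hbc; lra.
  by have := ha b c hbc; lra.
- by move=> b c; ring.
- by move=> b c; ring.
Qed.

Lemma bmax_le (X : eqType) (l : seq X) (x0 c : R) (f : X -> R) :
  x0 <= c -> (forall a, a \in l -> f a <= c) -> \big[Num.max/x0]_(a <- l) f a <= c.
Proof.
move=> h0; elim: l => [|a l IH] H; first by rewrite big_nil.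
rewrite big_cons ge_max H ?mem_head //= IH // => b hb.
by apply: H; rewrite in_cons hb orbT.
Qed.

Lemma le_bmax (X : eqType) (l : seq X) (x0 : R) (f : X -> R) b :
  b \in l -> f b <= \big[Num.max/x0]_(a <- l) f a.
Proof.
elim: l => [|a l IH] //; rewrite in_cons big_cons le_max.
case/orP => [/eqP <-|hl]; first by rewrite lexx.
by rewrite IH ?orbT.
Qed.

Lemma pay_sel (T S : finType) (A : seq {ffun T -> R}) q (pi : S -> T -> R) ahat :
  selection A q pi ahat -> forall s, pay A q pi s = post_val q pi s (ahat s).
Proof.
move=> H s; have [Hin Hmax] := H s.
rewrite /pay /maxA; set f := post_val q pi s.
have hA : head 0 A \in A by case: (A) Hin => //= a l _; rewrite mem_head.
apply/eqP; rewrite eq_le; apply/andP; split; last exact: le_bmax.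
by apply: bmax_le => //; exact: Hmax.
Qed.

End Helpers.

Section Main.
Variables (R : realFieldType) (T S S' : finType) (A : seq {ffun T -> R}) (p q : T -> R)
  (pi : S -> T -> R) (pi' : S' -> T -> R) (g : S -> S' -> R)
  (ahat : S -> {ffun T -> R}) (ahat' : S' -> {ffun T -> R}).
Hypotheses (hp : full_support p) (hq : full_support q) (hpi : signal_structure pi)
  (hpi' : signal_structure pi') (hg : garbling pi pi' g)
  (hsel : selection A q pi ahat) (hsel' : selection A q pi' ahat').

Definition Z (r : T -> R) (s' : S') := \sum_t r t * pi' s' t.

Lemma g_ge0 s s' : 0 <= g s s'. Proof. by case: hg => H _ _; case/andP: (H s s'). Qed.
Lemma pi'_ge0 s' t : 0 <= pi' s' t. Proof. by case: hpi' => H _ _; case/andP: (H s' t). Qed.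

Lemma mu_ss'E r s s' : mu_ss' pi' g r s s' = g s s' * Z r s'.
Proof. by rewrite /mu_ss' /Z mulr_sumr; apply: eq_bigr => t _; rewrite /mu; ring. Qed.

Lemma mu_sE r s : mu_s pi' g r s = \sum_s' mu_ss' pi' g r s s'.
Proof. by rewrite /mu_s /mu_ss' exchange_big. Qed.

Lemma mu_sE2 r s : mu_s pi' g r s = \sum_t r t * pi s t.
Proof.
case: hg => _ _ H.
rewrite /mu_s; apply: eq_bigr => t _; rewrite H mulr_sumr; apply: eq_bigr => s' _.
rewrite /mu; ring.
Qed.

Lemma mu_s'E r s' : mu_s' pi' g r s' = Z r s'.
Proof.
case: hg => _ H _.
rewrite /mu_s' /Z; apply: eq_bigr => t _.
rewrite /mu -mulr_sumr H mulr1 //.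
Qed.

Lemma Z_gt0 r : (forall t, 0 < r t) -> forall s', 0 < Z r s'.
Proof.
move=> hr s'; case: hpi' => _ _ H; have [t ht] := H s'.
apply: (@sum_pos _ _ _ t) => [j|]; last by apply: mulr_gt0.
by apply: mulr_ge0; [apply: ltW | apply: pi'_ge0].
Qed.

Lemma mu_s_gt0 r : (forall t, 0 < r t) -> forall s, 0 < mu_s pi' g r s.
Proof.
move=> hr s; rewrite mu_sE2; case: hpi => H0 _ H; have [t ht] := H s.
apply: (@sum_pos _ _ _ t) => [j|]; last by apply: mulr_gt0.
apply: mulr_ge0; [apply: ltW | by case/andP: (H0 s j)]; done.
Qed.


Lemma avgE : avg_pay A p q pi = \sum_s mu_s pi' g p s * post_val q pi s (ahat s).
Proof.
rewrite /avg_pay; under eq_bigr do rewrite mulr_sumr.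
rewrite exchange_big; apply: eq_bigr => s _.
rewrite mu_sE2 mulr_suml (pay_sel hsel); apply: eq_bigr => t _; ring.
Qed.

Lemma avg'E : avg_pay A p q pi' = \sum_s' Z p s' * post_val q pi' s' (ahat' s').
Proof.
rewrite /avg_pay; under eq_bigr do rewrite mulr_sumr.
rewrite exchange_big; apply: eq_bigr => s _.
rewrite /Z mulr_suml (pay_sel hsel'); apply: eq_bigr => t _; ring.
Qed.

Definition V s s' := \sum_t mu_t_given_ss' pi' g q t s s' * ahat s t.

Lemma PVE s s' : mu_ss' pi' g p s s' * V s s' = g s s' * Z p s' * post_val q pi' s' (ahat s).
Proof.
rewrite mu_ss'E; case: (eqVneq (g s s') 0) => [->|gn0]; first by rewrite !mul0r.
congr (_ * _); rewrite /V /post_val; apply: eq_bigr => t _.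
have zn0 : Z q s' != 0 by apply: lt0r_neq0; apply: Z_gt0; case: hq.
rewrite /mu_t_given_ss' mu_ss'E /posterior -/(Z q s') /mu; field.
by rewrite gn0 zn0.
Qed.

Lemma QVE s : \sum_s' mu_ss' pi' g q s s' * V s s' = mu_s pi' g q s * post_val q pi s (ahat s).
Proof.
have E : forall s', mu_ss' pi' g q s s' * V s s' = \sum_t mu pi' g q t s s' * ahat s t.
  move=> s'; rewrite mu_ss'E; case: (eqVneq (g s s') 0) => [g0|gn0].
    by rewrite g0 !mul0r; symmetry; apply: big1 => t _; rewrite /mu g0 !mulr0 mul0r.
  rewrite /V mulr_sumr; apply: eq_bigr => t _.
  have zn0 : Z q s' != 0 by apply: lt0r_neq0; apply: Z_gt0; case: hq.
  rewrite /mu_t_given_ss' mu_ss'E /mu; field.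
  by rewrite gn0 zn0.
under eq_bigr do rewrite E.
have mn0 : mu_s pi' g q s != 0 by apply: lt0r_neq0; apply: mu_s_gt0; case: hq.
rewrite exchange_big /post_val mulr_sumr; apply: eq_bigr => t _.
have -> : \sum_s' mu pi' g q t s s' * ahat s t = q t * pi s t * ahat s t.
  case: hg => _ _ H.
  rewrite H mulr_sumr mulr_suml; apply: eq_bigr => s' _; rewrite /mu; ring.
move: mn0; rewrite mu_sE2 /posterior => mn0; field.
by [].
Qed.

Lemma CsE s : mu_s pi' g p s * \sum_s' (mu_s'_given_s pi' g p s' s - mu_s'_given_s pi' g q s' s) * V s s'
  = \sum_s' mu_ss' pi' g p s s' * V s s'
    - mu_s pi' g p s / mu_s pi' g q s * \sum_s' mu_ss' pi' g q s s' * V s s'.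
Proof.
have mn0 : mu_s pi' g q s != 0 by apply: lt0r_neq0; apply: mu_s_gt0; case: hq.
have pn0 : mu_s pi' g p s != 0 by apply: lt0r_neq0; apply: mu_s_gt0; case: hp.
rewrite mulr_sumr [X in _ - X]mulr_sumr -sumrB; apply: eq_bigr => s' _.
rewrite /mu_s'_given_s; field.
by rewrite pn0 mn0.
Qed.

Lemma Cs2 s : mu_s pi' g p s * \sum_s' (mu_s'_given_s pi' g p s' s - mu_s'_given_s pi' g q s' s) * V s s'
  = \sum_s' g s s' * Z p s' * post_val q pi' s' (ahat s)
    - mu_s pi' g p s * post_val q pi s (ahat s).
Proof.
have mn0 : mu_s pi' g q s != 0 by apply: lt0r_neq0; apply: mu_s_gt0; case: hq.
rewrite CsE QVE; under eq_bigr do rewrite PVE.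
congr (_ - _); field; exact: mn0.
Qed.

Lemma partA : avg_pay A p q pi' - avg_pay A p q pi
        = Ccomp pi' g p q ahat + Icomp pi' g p q ahat ahat'.
Proof.
rewrite /Ccomp; under eq_bigr do rewrite -/(V _ _) Cs2.
rewrite sumrB -avgE.
have -> : Icomp pi' g p q ahat ahat' = \sum_s' Z p s' * \sum_t posterior q pi' s' t * (ahat' s' t - \sum_s g s s' * ahat s t).
  by rewrite /Icomp; apply: eq_bigr => s' _; rewrite mu_s'E.
set X := \sum_s \sum_s' _.
have -> : \sum_s' Z p s' * \sum_t posterior q pi' s' t * (ahat' s' t - \sum_s g s s' * ahat s t)
   = avg_pay A p q pi' - X.
  rewrite avg'E /X exchange_big -sumrB; apply: eq_bigr => s' _.
  have -> : \sum_i g i s' * Z p s' * post_val q pi' s' (ahat i) =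
     Z p s' * \sum_t posterior q pi' s' t * \sum_s g s s' * ahat s t.
    rewrite [RHS]mulr_sumr; under [RHS]eq_bigr do rewrite mulr_sumr mulr_sumr.
    rewrite [RHS]exchange_big; apply: eq_bigr => i _.
    rewrite /post_val mulr_sumr; apply: eq_bigr => t _; ring.
  rewrite /post_val -mulrBr -sumrB; congr (_ * _); apply: eq_bigr => t _; ring.
ring.
Qed.

Lemma partB : 0 <= Icomp pi' g p q ahat ahat'.
Proof.
apply: sumr_ge0 => s' _; apply: mulr_ge0.
  by rewrite mu_s'E; apply: ltW; apply: Z_gt0; case: hp.
have -> : \sum_t posterior q pi' s' t * (ahat' s' t - \sum_s g s s' * ahat s t)
   = post_val q pi' s' (ahat' s') - \sum_s g s s' * post_val q pi' s' (ahat s).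
  have -> : \sum_s g s s' * post_val q pi' s' (ahat s) =
     \sum_t posterior q pi' s' t * \sum_s g s s' * ahat s t.
    under [RHS]eq_bigr do rewrite mulr_sumr.
    rewrite [RHS]exchange_big; apply: eq_bigr => i _.
    rewrite /post_val mulr_sumr; apply: eq_bigr => t _; ring.
  rewrite /post_val -sumrB; apply: eq_bigr => t _; ring.
have : \sum_s g s s' * post_val q pi' s' (ahat s) <= \sum_s g s s' * post_val q pi' s' (ahat' s').
  apply: ler_sum => s _; apply: ler_wpM2l; first exact: g_ge0.
  have [h1 _] := hsel s; have [_ h2] := hsel' s'; exact: h2.
rewrite -mulr_suml; case: hg => _ -> _; rewrite mul1r; lra.
Qed.

Definition Pm s s' := mu_ss' pi' g p s s'.
Definition Qm s s' := mu_ss' pi' g q s s'.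

Lemma Cs_D s : mu_s pi' g p s * \sum_s' (mu_s'_given_s pi' g p s' s - mu_s'_given_s pi' g q s' s) * V s s'
  = (\sum_s1 \sum_s2 (Qm s s1 * Pm s s2 * V s s2 - Pm s s1 * Qm s s2 * V s s2)) / mu_s pi' g q s.
Proof.
have mn0 : mu_s pi' g q s != 0 by apply: lt0r_neq0; apply: mu_s_gt0; case: hq.
have -> : \sum_s1 \sum_s2 (Qm s s1 * Pm s s2 * V s s2 - Pm s s1 * Qm s s2 * V s s2)
   = mu_s pi' g q s * (\sum_s' Pm s s' * V s s') - mu_s pi' g p s * (\sum_s' Qm s s' * V s s').
  rewrite /Qm /Pm !mu_sE !mulr_suml -sumrB; apply: eq_bigr => s1 _.
  rewrite !mulr_sumr -sumrB; apply: eq_bigr => s2 _; ring.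
rewrite CsE /Pm /Qm; field; exact: mn0.
Qed.

Lemma V_form s s' : g s s' != 0 ->
  V s s' = (\sum_t q t * pi' s' t * ahat s t) / Z q s'.
Proof.
move=> gn0.
have zn0 : Z q s' != 0 by apply: lt0r_neq0; apply: Z_gt0; case: hq.
rewrite /V mulr_suml; apply: eq_bigr => t _.
rewrite /mu_t_given_ss' mu_ss'E /mu; field.
by rewrite gn0 zn0.
Qed.

Lemma pair_lemma (th : T -> R) (sv : S' -> R) s s1 s2 :
  injective th -> MLR th sv pi' -> sv s1 < sv s2 ->
  (forall t t', th t < th t' -> ahat s t < ahat s t') ->
  exists2 c, 0 <= c &
   (Qm s s1 * Pm s s2 - Pm s s1 * Qm s s2) * (V s s2 - V s s1)
     = c * (Z q s1 * Z p s2 - Z p s1 * Z q s2).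
Proof.
move=> inj hM hs ha.
rewrite /Qm /Pm !mu_ss'E.
case: (eqVneq (g s s1) 0) => [->|g1]; first by exists 0 => //; ring.
case: (eqVneq (g s s2) 0) => [->|g2]; first by exists 0 => //; ring.
have hq0 : forall t, 0 < q t by case: hq.
have z1 : 0 < Z q s1 by apply: Z_gt0.
have z2 : 0 < Z q s2 by apply: Z_gt0.
rewrite (V_form g1) (V_form g2).
set N1 := \sum_t q t * pi' s1 t * ahat s t.
set N2 := \sum_t q t * pi' s2 t * ahat s t.
exists (g s s1 * g s s2 * (N2 / Z q s2 - N1 / Z q s1)); last first.
  by field; rewrite !lt0r_neq0.
apply: mulr_ge0; first by apply: mulr_ge0; apply: g_ge0.
have -> : N2 / Z q s2 - N1 / Z q s1 = (Z q s1 * N2 - N1 * Z q s2) / (Z q s1 * Z q s2).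
  by field; rewrite !lt0r_neq0.
apply: divr_ge0; last by apply: mulr_ge0; apply: ltW.
exact: (V_lemma (a := ahat s) inj hq0 ha hM hs).
Qed.

Lemma sign_C (th : T -> R) (sv : S' -> R) (sgn : R) :
  injective th -> injective sv -> MLR th sv pi' -> monotone_firm th A ->
  (forall s1 s2, sv s1 < sv s2 -> 0 <= sgn * (Z q s1 * Z p s2 - Z p s1 * Z q s2)) ->
  0 <= sgn * Ccomp pi' g p q ahat.
Proof.
move=> inj injsv hM hmon hsg.
rewrite /Ccomp mulr_sumr; apply: sumr_ge0 => s _.
rewrite [X in sgn * X](Cs_D s) mulrA; apply: divr_ge0; last first.
  by apply: ltW; apply: mu_s_gt0; case: hq.
have ha : forall t t', th t < th t' -> ahat s t < ahat s t'.
  by apply: hmon; have [h _] := hsel s.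
rewrite mulr_sumr; under eq_bigr do rewrite mulr_sumr.
apply: sym_key => s1 s2.
have -> : sgn * (Qm s s1 * Pm s s2 * V s s2 - Pm s s1 * Qm s s2 * V s s2) +
          sgn * (Qm s s2 * Pm s s1 * V s s1 - Pm s s2 * Qm s s1 * V s s1)
  = sgn * ((Qm s s1 * Pm s s2 - Pm s s1 * Qm s s2) * (V s s2 - V s s1)) by ring.
case: (eqVneq s1 s2) => [->|ne].
  have -> : (Qm s s2 * Pm s s2 - Pm s s2 * Qm s s2) = 0 by ring.
  by rewrite mul0r mulr0.
have ne' : sv s1 != sv s2 by apply: contra ne => /eqP /injsv ->.
case: (ltgtP (sv s1) (sv s2)) ne' => // [lt|gt] _.
  have [c hc ->] := pair_lemma inj hM lt ha.
  rewrite mulrA (mulrC sgn) -mulrA; apply: mulr_ge0 => //; exact: hsg.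
have -> : (Qm s s1 * Pm s s2 - Pm s s1 * Qm s s2) * (V s s2 - V s s1)
   = (Qm s s2 * Pm s s1 - Pm s s2 * Qm s s1) * (V s s1 - V s s2) by ring.
have [c hc ->] := pair_lemma inj hM gt ha.
rewrite mulrA (mulrC sgn) -mulrA; apply: mulr_ge0 => //; exact: hsg.
Qed.

End Main.

Unset Implicit Arguments. Set Strict Implicit.

Theorem theorem1 (R : realFieldType) (T S S' : finType) (th : T -> R)
  (A : seq {ffun T -> R}) (p q : T -> R)
  (pi : S -> T -> R) (pi' : S' -> T -> R) (g : S -> S' -> R)
  (ahat : S -> {ffun T -> R}) (ahat' : S' -> {ffun T -> R}) :
  injective th -> (1 < #|T|)%N ->
  A != [::] ->
  full_support p -> full_support q ->
  signal_structure pi -> signal_structure pi' ->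
  garbling pi pi' g ->
  selection A q pi ahat -> selection A q pi' ahat' ->
  [/\ avg_pay A p q pi' - avg_pay A p q pi
        = Ccomp pi' g p q ahat + Icomp pi' g p q ahat ahat',
      0 <= Icomp pi' g p q ahat ahat' &
      (monotone_firm th A ->
       forall sv : S' -> R, injective sv -> MLR th sv pi' ->
         (LR_ge th p q -> 0 <= Ccomp pi' g p q ahat) /\
         (LR_ge th q p -> Ccomp pi' g p q ahat <= 0))].
Proof.
move=> inj _ _ hp hq hpi hpi' hg hsel hsel'; split.
    exact: partA.
  exact (partB hp hpi' hg hsel hsel').
move=> hmon sv injsv hM; split => hLR.
  rewrite -[Ccomp _ _ _ _ _]mul1r.
  have hsg : forall s1 s2, sv s1 < sv s2 -> 0 <= 1 * (Z pi' q s1 * Z pi' p s2 - Z pi' p s1 * Z pi' q s2).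
    by move=> s1 s2 hs; rewrite mul1r; exact: (LR_lemma inj hLR hM hs).
  exact (sign_C (sgn:=1) hp hq hpi hpi' hg hsel inj injsv hM hmon hsg).
have : 0 <= -1 * Ccomp pi' g p q ahat.
  have hsg : forall s1 s2, sv s1 < sv s2 -> 0 <= -1 * (Z pi' q s1 * Z pi' p s2 - Z pi' p s1 * Z pi' q s2).
    move=> s1 s2 hs; have := LR_lemma inj hLR hM hs; rewrite /Z; lra.
  exact (sign_C (sgn:=-1) hp hq hpi hpi' hg hsel inj injsv hM hmon hsg).
lra.
Qed.
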